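(* Let $\Omega_D := \{x \in \mathbb{R}^2 : |x| \le 1\}$ and $\Omega_S := [-1,1]\times[0,2\pi)$. Let $\mathcal{E} \in C^2(\mathbb{R})$ satisfy $\mathcal{E}(x) = \exp(-x)$ for all $x \ge 0$, with $|\mathcal{E}|$, $|\mathcal{E}'|$ and $|\mathcal{E}''|$ bounded on $\mathbb{R}$. For $w \in L_1(\mathbb{R})$ define $$F(f)(s,\theta) := \int_{\mathbb{R}} w(r-s)\, \mathcal{E}\Big(\tfrac{1}{2}(Rf)(r,\theta)\Big)\, dr, \qquad (s,\theta) \in \Omega_S,$$ for $f \in L_2(\Omega_D)$, where $R$ is the Radon transform. Then $F : L_2(\Omega_D) \to L_2(\Omega_S)$ is well-defined, i.e. $F(f) \in L_2(\Omega_S)$ for every $f \in L_2(\Omega_D)$.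
   Context: Functions $f \in L_2(\Omega_D)$ are extended by zero outside $\Omega_D$. The Radon transform is $(Rf)(s,\theta) = \int_{\mathbb{R}} f(s\,u(\theta) + \sigma\, u(\theta)^\perp)\, d\sigma$ for $s \in \mathbb{R}$, $\theta \in [0,2\pi)$, where $u(\theta) = (\cos\theta, \sin\theta)^T$ and $u(\theta)^\perp$ is the unit vector perpendicular to it. $R$ is a bounded linear operator from $L_2(\Omega_D)$ to $L_2(\mathbb{R}\times[0,2\pi))$ (and to $L_2(\Omega_S)$), and $(Rf)(s,\theta) = 0$ for $|s|>1$. *)

(* Defs.v *)
From HB Require Import structures.
From mathcomp Require Import all_boot all_order all_algebra.
From mathcomp Require Import all_classical all_reals all_analysis.
Unset Printing Implicit Defensive.
Import Order.TTheory GRing.Theory Num.Theory.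
Import numFieldNormedType.Exports.
Local Open Scope classical_set_scope.
Local Open Scope ring_scope.

Definition OmegaD (R : realType) : set (R * R) :=
  [set x | x.1 ^+ 2 + x.2 ^+ 2 <= 1].

Definition OmegaS (R : realType) : set (R * R) :=
  [set p | -1 <= p.1 <= 1 /\ 0 <= p.2 < 2 * pi].

Definition leb2 (R : realType) :=
  ((@lebesgue_measure R) \x (@lebesgue_measure R))%E.

Definition extD (R : realType) (f : R * R -> R) : R * R -> R :=
  fun x => if `[< OmegaD R x >] then f x else 0.

(* Radon transform: (Rf)(s,theta) = int_R f(s u(theta) + sigma u(theta)^perp) dsigma,
   u(theta) = (cos theta, sin theta), u(theta)^perp = (- sin theta, cos theta). *)
Definition radon (R : realType) (f : R * R -> R) (s theta : R) : R :=
  Rintegral (@lebesgue_measure R) setT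
    (fun sigma => extD R f (s * cos theta - sigma * sin theta,
                          s * sin theta + sigma * cos theta)).

Definition Fop (R : realType) (w E : R -> R) (f : R * R -> R) (p : R * R) : R :=
  Rintegral (@lebesgue_measure R) setT
    (fun r => w (r - p.1) * E ((radon R f r p.2) / 2)).

(* Main.v *)
Require Import Defs.
From HB Require Import structures.
From mathcomp Require Import all_boot all_order all_algebra.
From mathcomp Require Import all_classical all_reals all_analysis.
From mathcomp Require Import measurable_realfun ring.
Import Order.TTheory GRing.Theory Num.Theory.
Import numFieldNormedType.Exports.
Local Open Scope classical_set_scope.
Local Open Scope ring_scope.

Section helpers.
Context {R : realType}.
Local Notation mu := (@lebesgue_measure R).

Lemma param_meas d1 (T1 : measurableType d1) (g : T1 * R -> R) :
  measurable_fun setT g ->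
  measurable_fun setT (fun x => Rintegral mu setT (fun y => g (x, y))).
Proof.
move=> mg.
have mgE : measurable_fun [set: T1 * R] (fun z => (g z)%:E) by apply/measurable_EFinP.
rewrite /Rintegral.
apply: (measurableT_comp (fine_measurable measurableT)) => /=.
under eq_fun => x do rewrite integralE.
apply: emeasurable_funB.
- have H0 := measurable_fun_fubini_tonelli_F (m2:=mu) ((fun z => (g z)%:E)^\+)%E
    (measurable_funepos mgE) (fun z => funepos_ge0 _ z).
  apply: (eq_measurable_fun _ _ H0) => x _; rewrite /fubini_F; apply: eq_integral => y _; by rewrite !funeposE.
- have H1 := measurable_fun_fubini_tonelli_F (m2:=mu) ((fun z => (g z)%:E)^\-)%E
    (measurable_funeneg mgE) (fun z => funeneg_ge0 _ z).
  refine (eq_measurable_fun _ _ H1) => x _; rewrite /fubini_F; apply: eq_integral => y _; by rewrite !funenegE.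
Qed.

Lemma mshift (a : R) : measurable_fun setT (fun x : R => x + a).
Proof. by apply: measurable_funD => //; exact: measurable_cst. Qed.


Lemma preim_shift (a b c : R) :
  (fun x : R => x + a) @^-1` `]b, c]%classic = `]b - a, c - a]%classic.
Proof.
apply/seteqP; split => x /=; rewrite !in_itv /=.
  by rewrite ltrBlDr lerBrDr.
by rewrite ltrBlDr lerBrDr.
Qed.

Lemma leb_shift (a : R) (A : set R) : measurable A ->
  mu ((fun x => x + a) @^-1` A) = mu A.
Proof.
move=> mA.
have := @lebesgue_measure_unique R (@pushforward _ _ (measurableTypeR R) (measurableTypeR R) R mu (fun x : R => x + a)) _ A mA.
move/(_ (mshift a)) => H.
rewrite H // => X /ocitvP [->|[[b c] /= bc ->]]; rewrite /pushforward.
  reflexivity.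
rewrite preim_shift !lebesgue_measure_itv /= !lte_fin ltrD2r.
case: ifP => // _.
by rewrite -!EFinD; congr EFin; ring.
Qed.

Lemma int_shift (a : R) (h : R -> \bar R) : measurable_fun setT h ->
  (forall x, 0 <= h x)%E -> (\int[mu]_x h (x + a)%R = \int[mu]_x h x)%E.
Proof.
move=> mh h0.
have := @ge0_integral_pushforward _ _ (measurableTypeR R) (measurableTypeR R) R
  (fun x => x + a) (mshift a) mu setT h measurableT mh (fun y _ => h0 y).
rewrite preimage_setT => <-.
apply: eq_measure_integral; first exact: mshift.
move=> _ A mA _ /=; exact (leb_shift a A mA).
Qed.

End helpers.

Theorem proposition1 (R : realType) (E w : R -> R)
  (* E in C^2(R) *)
  (hE1 : forall x : R, derivable E x 1)
  (hE2 : forall x : R, derivable (derive1 E) x 1)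
  (hE2c : continuous (derive1n 2 E))
  (* E(x) = exp(-x) for x >= 0 *)
  (hEexp : forall x : R, 0 <= x -> E x = expR (- x))
  (* |E|, |E'|, |E''| bounded on R *)
  (hEb0 : exists M : R, forall x, `|E x| <= M)
  (hEb1 : exists M : R, forall x, `|(derive1 E) x| <= M)
  (hEb2 : exists M : R, forall x, `|(derive1n 2 E) x| <= M)
  (* w in L_1(R) *)
  (hw : (@lebesgue_measure R).-integrable setT (fun x => (w x)%:E))
  (* f in L_2(Omega_D) *)
  (f : R * R -> R)
  (hfm : measurable_fun (OmegaD R) f)
  (hf2 : (\int[leb2 R]_(x in OmegaD R) (`|f x| ^+ 2)%:E < +oo)%E) :
  (* F(f) in L_2(Omega_S) *)
  measurable_fun (OmegaS R) (Fop R w E f) /\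
  (\int[leb2 R]_(x in OmegaS R) (`|Fop R w E f x| ^+ 2)%:E < +oo)%E.

Proof.
have mw : measurable_fun setT w.
  have [+ _] := integrableP _ _ _ hw.
  by move/measurable_EFinP.
have cE : continuous E.
  by move=> x; exact/differentiable_continuous/derivable1_diffP/hE1.
have mE : measurable_fun setT E := continuous_measurable_fun cE.
have mq : measurable_fun [set: R * R] (fun x : R * R => x.1 ^+ 2 + x.2 ^+ 2).
  by apply: measurable_funD; apply: measurable_funX;
    [exact: measurable_fst | exact: measurable_snd].
have mOD : measurable (OmegaD R).
  have := mq measurableT _ (measurable_itv `]-oo, 1]).
  rewrite setTI; congr measurable; apply/seteqP; split => x;
    by rewrite /OmegaD /= in_itv /=.
have mextD : measurable_fun setT (extD R f).
  have := (measurable_restrictT f mOD).1 hfm.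
  apply: eq_measurable_fun => x _.
  by rewrite /extD /patch /=.
pose rot := fun z : (R * R) * R =>
  (z.1.1 * cos z.1.2 - z.2 * sin z.1.2, z.1.1 * sin z.1.2 + z.2 * cos z.1.2).
have m11 : measurable_fun [set: (R * R) * R] (fun z => z.1.1).
  exact: (measurableT_comp measurable_fst measurable_fst).
have m12 : measurable_fun [set: (R * R) * R] (fun z => z.1.2).
  exact: (measurableT_comp measurable_snd measurable_fst).
have m2 : measurable_fun [set: (R * R) * R] (fun z => z.2).
  exact: measurable_snd.
have mcos : measurable_fun [set: (R * R) * R] (fun z => cos z.1.2).
  exact: (measurableT_comp (continuous_measurable_fun (@continuous_cos R)) m12).
have msin : measurable_fun [set: (R * R) * R] (fun z => sin z.1.2).
  exact: (measurableT_comp (continuous_measurable_fun (@continuous_sin R)) m12).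
have mrot : measurable_fun setT rot.
  apply: measurable_fun_pair.
    by apply: measurable_funB; apply: measurable_funM.
  by apply: measurable_funD; apply: measurable_funM.
have mrad : measurable_fun [set: R * R] (fun q : R * R => radon R f q.1 q.2).
  have := param_meas _ _ _ (measurableT_comp mextD mrot).
  apply: eq_measurable_fun => q _.
  reflexivity.
pose h := fun z : (R * R) * R => w (z.2 - z.1.1) * E (radon R f z.2 z.1.2 / 2).
have mh : measurable_fun setT h.
  apply: measurable_funM.
    exact: (measurableT_comp mw (measurable_funB m2 m11)).
  apply: (measurableT_comp mE).
  apply: measurable_funM; last exact: measurable_cst.
  exact: (measurableT_comp mrad (measurable_fun_pair m2 m12)).
have mF : measurable_fun [set: R * R] (Fop R w E f).
  have := param_meas _ _ _ mh.
  apply: eq_measurable_fun => q _.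
  reflexivity.
split.
  exact: (measurable_funS measurableT (@subsetT _ _) mF).
have [M0 hM0] := hEb0.
have M0ge0 : 0 <= M0 := le_trans (normr_ge0 _) (hM0 0).
have [_ hWfin] := integrableP _ _ _ hw.
pose Wr := fine (\int[lebesgue_measure]_x (`|w x|)%:E)%E.
have Wabs : (\int[lebesgue_measure]_x `|(w x)%:E| =
             \int[lebesgue_measure]_x (`|w x|)%:E)%E.
  by apply: eq_integral => x _; rewrite abse_EFin.
have WE : (\int[lebesgue_measure]_x (`|w x|)%:E)%E = Wr%:E.
  rewrite /Wr fineK // ge0_fin_numE; first by rewrite -Wabs.
  by apply: integral_ge0 => x _; rewrite lee_fin.
have Wr0 : 0 <= Wr by rewrite /Wr; apply: fine_ge0; apply: integral_ge0 => x _; rewrite lee_fin.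
have bnd : forall p, `|Fop R w E f p| <= M0 * Wr.
  move=> p.
  have mhp : measurable_fun [set: R] (fun r => h (p, r)).
    apply: (measurableT_comp mh); apply: measurable_fun_pair.
      exact: measurable_cst.
    exact: measurable_id.
  have mwp : measurable_fun [set: R] (fun x => `|w (x - p.1)|).
    apply: (measurableT_comp (@normr_measurable R setT)).
    apply: (measurableT_comp mw); apply: measurable_funB.
      exact: measurable_id.
    exact: measurable_cst.
  have key : (`|\int[lebesgue_measure]_x (h (p, x))%:E| <= (M0 * Wr)%:E)%E.
    apply: le_trans (le_abse_integral _ measurableT _) _.
      by apply/measurable_EFinP.
    have -> : (\int[lebesgue_measure]_x `|(h (p, x))%:E| =
               \int[lebesgue_measure]_x (`|h (p, x)|)%:E)%E.
      by apply: eq_integral => x _; rewrite abse_EFin.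
    apply: (@le_trans _ _ (\int[lebesgue_measure]_x (M0%:E * (`|w (x - p.1)|)%:E))%E).
      apply: ge0_le_integral.
      - exact: measurableT.
      - by move=> x _; rewrite lee_fin.
      - apply/measurable_EFinP.
        exact: (measurableT_comp (@normr_measurable R setT) mhp).
      - apply/measurable_EFinP.
        exact: (measurable_funM (measurable_cst _) mwp).
      - move=> x _; rewrite lee_fin /h normrM mulrC.
        exact: (ler_wpM2r (normr_ge0 _) (hM0 _)).
    have mwpE : measurable_fun [set: R] (fun x : R => (`|w (x - p.1)|)%:E).
      exact/measurable_EFinP.
    have wp0 : forall x : R, setT x -> (0 <= (`|w (x - p.1)|)%:E)%E.
      by move=> x _; rewrite lee_fin.
    have M0E : (0 <= M0%:E)%E by rewrite lee_fin.
    rewrite (ge0_integralZl lebesgue_measure measurableT mwpE wp0 M0E).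
    have mwE : measurable_fun [set: R] (fun x : R => (`|w x|)%:E).
      apply/measurable_EFinP.
      exact: (measurableT_comp (@normr_measurable R setT) mw).
    have w0 : forall x : R, (0 <= (`|w x|)%:E)%E by move=> x; rewrite lee_fin.
    rewrite (int_shift (- p.1) _ mwE w0).
    by rewrite WE -EFinM.
  have -> : Fop R w E f p = fine (\int[lebesgue_measure]_x (h (p, x))%:E)%E by [].
  move: key; case: (\int[lebesgue_measure]_x (h (p, x))%:E)%E => [r||] /=.
  - by rewrite lee_fin.
  - by [].
  - by [].
have OSE : OmegaS R = `[-1, 1]%classic `*` `[0, 2 * pi[%classic.
  by apply/seteqP; split => -[x y]; rewrite /OmegaS /= !in_itv.
pose C := M0 * Wr.
have H1 : (\int[leb2 R]_(x in OmegaS R) (`|Fop R w E f x| ^+ 2)%:E <=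
           \int[leb2 R]_(x in OmegaS R) (C ^+ 2)%:E)%E.
  apply: ge0_le_integral.
  - rewrite OSE; apply: measurableX; exact: measurable_itv.
  - by move=> x _; rewrite lee_fin.
  - apply/measurable_EFinP; apply: measurable_funX.
    apply: (measurableT_comp (@normr_measurable R setT)).
    exact: (measurable_funS measurableT (@subsetT _ _) mF).
  - apply/measurable_EFinP; exact: measurable_cst.
  - move=> x _; rewrite lee_fin /= !expr2.
    by apply: ler_pM => //; exact: bnd.
apply: le_lt_trans H1 _.
rewrite integral_cst; last by rewrite OSE; apply: measurableX; exact: measurable_itv.
pose A1 : set R := `[-1, 1]%classic.
pose A2 : set R := `[0, 2 * pi[%classic.
have HP : (leb2 R (OmegaS R) = lebesgue_measure A1 * lebesgue_measure A2)%E.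
  rewrite OSE /leb2; apply: product_measure1E; exact: measurable_itv.
rewrite -[X in (_ * X < _)%E]/(leb2 R (OmegaS R)) HP.
rewrite /A1 /A2 !lebesgue_measure_itv /=.
case: ifP => _; case: ifP => _; rewrite ?mule0 ?mul0e -?EFinN -?EFinD -?EFinM ?ltry //.
Qed.
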